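(* Let $T$ be a tree of order $n\ge 2$ and let $X\in\mathbb R^{V(T)}$ be a vector all of whose entries are non-negative, or all of whose entries are non-positive. Label the vertices $v_1,\dots,v_n$ of $T$ so that $|X_{v_1}|\ge |X_{v_2}|\ge\cdots\ge |X_{v_n}|$, and write $X_i=X_{v_i}$. Then $$\sum_{uv\in E(T)}X_uX_v\ \le\ \sum_{i=2}^n X_1X_i ,$$ where the right-hand side equals $\sum_{uv\in E(K_{1,n-1})}X_uX_v$ for the star $K_{1,n-1}$ on the same vertex set with center $v_1$. If moreover all entries of $X$ are positive (or all are negative) and $|X_1|>|X_2|$, then equality holds only if $T$ is the star $K_{1,n-1}$ with center $v_1$.
   Context: $K_{1,n-1}$ denotes the star of order $n$; its vertex of degree $n-1$ is called the center. *)

(* Defs.v *)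
From HB Require Import structures.
From mathcomp Require Import all_boot all_order all_algebra.
Set Implicit Arguments. Unset Strict Implicit. Unset Printing Implicit Defensive.
Import Order.TTheory GRing.Theory Num.Theory.

Definition simple_graph (T : finType) (e : rel T) : Prop :=
  symmetric e /\ irreflexive e.

Definition connected (T : finType) (e : rel T) : Prop :=
  forall x y : T, connect e x y.

Definition acyclic (T : finType) (e : rel T) : Prop :=
  forall c : seq T, cycle e c -> uniq c -> size c < 3.

Definition is_tree (T : finType) (e : rel T) : Prop :=
  [/\ simple_graph e, connected e & acyclic e].

Definition edges (T : finType) (e : rel T) : {set {set T}} :=
  [set E : {set T} | [exists u, exists v, e u v && (E == [set u; v])]].

Definition star_edges (T : finType) (c : T) : {set {set T}} :=
  [set [set c; u] | u in [set~ c]].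

Definition edge_sum (R : realFieldType) (T : finType) (E : {set {set T}})
    (X : T -> R) : R :=
  (\sum_(F in E) \prod_(x in F) X x)%R.

(* Main.v *)
Require Import Defs.
From HB Require Import structures.
From mathcomp Require Import all_boot all_order all_algebra.
Import Order.TTheory GRing.Theory Num.Theory.
Set Implicit Arguments. Unset Strict Implicit.

Section Tree.
Variables (T : finType) (e : rel T).
Hypothesis esym : symmetric e.
Hypothesis eirr : irreflexive e.
Hypothesis econ : connected e.
Hypothesis eacy : acyclic e.
Variable r : T.

Definition er (w : T) : rel T := [rel x y | e x y && (x != w) && (y != w)].

Lemma er_sym w : symmetric (er w).
Proof. by move=> x y; rewrite /er /= esym andbAC. Qed.

Lemma path_er w x s : path e x s -> w \notin x :: s -> path (er w) x s.
Proof.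
elim: s x => [//|y s IH] x /= /andP[exy ps]; rewrite !inE !negb_or => /and3P[wx wy ws].
rewrite /er /= exy eq_sym wx eq_sym wy /=; apply: IH => //; by rewrite inE negb_or wy.
Qed.

Lemma er_notin w x s : path (er w) x s -> w \notin s.
Proof.
elim: s x => [//|y s IH] x /= /andP[/andP[/andP[_ _] yw] ps].
by rewrite inE negb_or eq_sym yw (IH y).
Qed.

Lemma er_sub w : subrel (er w) e.
Proof. by move=> x y /= /andP[/andP[]]. Qed.

Lemma uniq_path_to x y : exists p, [/\ path e x p, last x p = y & uniq (x :: p)].
Proof.
have /connectP[p ep ->] := econ x y.
case: (shortenP ep) => p' ep' up' _; by exists p'.
Qed.

Lemma no_two w a b : e w a -> e w b -> connect (er w) a b -> a = b.
Proof.
move=> ewa ewb /connectP[q pq eb]; move: eb.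
case: (shortenP pq) => q' pq' uq' _ eb; subst b.
case: (eqVneq a (last a q')) => // neq; exfalso.
have := @eacy (w :: a :: q').
have hc : cycle e (w :: a :: q').
  rewrite /cycle rcons_path /= ewa (sub_path (@er_sub w) pq') /=.
  by rewrite esym.
have hu : uniq (w :: a :: q').
  rewrite cons_uniq uq' andbT inE negb_or (er_notin pq') andbT.
  by apply/eqP => wa; move: ewa; rewrite wa eirr.
move=> /(_ hc hu); case: q' {ewb pq' uq' hc hu pq} neq => [|z q'] /=; first by rewrite eqxx.
by [].
Qed.

Definition P w a := e w a && connect (er w) r a.

Lemma P_exists w : w != r -> exists a, P w a.
Proof.
move=> wr; have [p [ep lp up]] := uniq_path_to r w.
case/lastP: p ep lp up => [|q z] ep lp up; first by move: wr; rewrite -lp /= eqxx.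
rewrite last_rcons in lp; subst z.
move: ep; rewrite rcons_path => /andP[eq ew].
exists (last r q); rewrite /P esym ew /=.
apply/connectP; exists q => //; apply: path_er => //.
by move: up; rewrite -rcons_cons rcons_uniq => /andP[].
Qed.

Lemma P_uniq w a b : P w a -> P w b -> a = b.
Proof.
move=> /andP[ewa ca] /andP[ewb cb]; apply: (no_two ewa ewb).
apply: connect_trans cb; by rewrite (sym_connect_sym (@er_sym w)).
Qed.

Definition par w := odflt r [pick a | P w a].

Lemma par_P w : w != r -> P w (par w).
Proof.
move=> wr; rewrite /par; case: pickP => [a //|/= h].
by have [a] := P_exists wr; rewrite h.
Qed.

Lemma er_from w x y : connect (er w) x y -> x = y \/ x != w.
Proof.
case/connectP => [[|z q]] /=; first by move=> _ ->; left.
by move=> /andP[/andP[/andP[_ xw] _] _] _; right.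
Qed.

Lemma edge_par u v : e u v -> (u != r /\ v = par u) \/ (v != r /\ u = par v).
Proof.
move=> euv.
have uv : u != v by apply/eqP => h; move: euv; rewrite h eirr.
case: (boolP (connect (er v) r u)) => [c|nc].
  have vr : v != r.
    apply/eqP => vr; subst v; case: (er_from c) => [ru|]; last by rewrite eqxx.
    by move: uv; rewrite ru eqxx.
  right; split => //; apply: (P_uniq (w := v)); first by rewrite /P esym euv c.
  exact: par_P.
have ur : u != r by apply/eqP => ur; move: nc; rewrite ur connect0.
left; split => //; apply: (P_uniq (w := u)); last exact: par_P.
rewrite /P euv /=.
have [p [ep lp up]] := uniq_path_to r v.
case: (boolP (u \in r :: p)) => [ui|un]; last first.
  by apply/connectP; exists p => //; apply: path_er.
exfalso; move: nc; apply/negP/negPn.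
case/splitPl: ui ep lp up => p1 p2 lp1.
rewrite cat_path last_cat lp1 => /andP[ep1 _] lp2 up.
apply/connectP; exists p1; last by rewrite lp1.
apply: path_er => //; apply/negP => vin.
have vin2 : v \in u :: p2 by rewrite -lp2 mem_last.
move: vin2; rewrite inE => /orP[/eqP vu|vp2]; first by move: uv; rewrite vu eqxx.
move: up; rewrite -cat_cons cat_uniq => /and3P[_ /hasPn h _].
by move: (h v vp2); rewrite vin.
Qed.

Lemma edges_eq : edges e = [set [set w; par w] | w in [set~ r]].
Proof.
apply/setP => F; apply/idP/idP.
  rewrite inE => /existsP[u /existsP[v /andP[euv /eqP ->]]].
  case: (edge_par euv) => [[ur ->]|[vr ->]].
    by apply/imsetP; exists u; rewrite // in_setC1.
  by apply/imsetP; exists v; rewrite ?in_setC1 // setUC.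
case/imsetP => w; rewrite in_setC1 => wr ->.
rewrite inE; apply/existsP; exists w; apply/existsP; exists (par w).
by case/andP: (par_P wr) => -> _; rewrite eqxx.
Qed.

End Tree.

Local Open Scope ring_scope.

Theorem lemma3p1 (R : realFieldType) (T : finType) (e : rel T) (n : nat)
  (X : T -> R) (lab : 'I_n.+2 -> T) :
  is_tree e ->
  ((forall v, 0 <= X v) \/ (forall v, X v <= 0)) ->
  bijective lab ->
  (forall i j : 'I_n.+2, (i <= j)%N -> `|X (lab j)| <= `|X (lab i)|) ->
  edge_sum (edges e) X <= \sum_(i < n.+2 | i != ord0) X (lab ord0) * X (lab i)
  /\ (\sum_(i < n.+2 | i != ord0) X (lab ord0) * X (lab i)
        = edge_sum (star_edges (lab ord0)) X)
  /\ (((forall v, 0 < X v) \/ (forall v, X v < 0)) ->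
      `|X (lab (inord 1))| < `|X (lab ord0)| ->
      edge_sum (edges e) X = \sum_(i < n.+2 | i != ord0) X (lab ord0) * X (lab i) ->
      edges e = star_edges (lab ord0)).
Proof.
move=> [[esy eirr] econ eacy] hsign hbij hmono.
case: (hbij) => lab' h1 h2.
set r := lab ord0.
have hmax v : `|X v| <= `|X r| by rewrite -(h2 v); apply: hmono; apply: leq0n.
have hXX a b : X a * X b = `|X a| * `|X b|.
  rewrite -normrM ger0_norm //; case: hsign => h; [apply: mulr_ge0|apply: mulr_le0]; apply: h.
have pair u v : u != v -> \prod_(x in [set u; v]) X x = X u * X v.
  by move=> uv; rewrite big_setU1 ?big_set1 // in_set1.
have E := edges_eq esy eirr econ eacy r.
set g := par e r in E.
have hne w : w \in [set~ r] -> w != g w.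
  rewrite in_setC1 => wr; case/andP: (par_P esy econ (r:=r) wr) => ew _.
  by apply/eqP => h; move: ew; rewrite -/g -h eirr.
set A := [set~ r].
have hS2 : \sum_(i < n.+2 | i != ord0) X r * X (lab i) = \sum_(w in A) X r * X w.
  symmetry; rewrite (reindex lab); last exact: onW_bij.
  by apply: eq_bigl => i; rewrite in_setC1 (inj_eq (can_inj h1)).
set S1 := \sum_(w in A) X w * X (g w).
have hle1 : edge_sum (edges e) X <= S1.
  rewrite /edge_sum E /S1.
  rewrite [Y in _ <= Y](partition_big (fun w => [set w; g w])
     (fun F => F \in [set [set w; g w] | w in A])); last first.
    by move=> w wA; apply: imset_f.
  apply: ler_sum => F /imsetP[w0 w0A ->].
  rewrite [Y in _ <= Y](bigD1 w0) /=; last by rewrite eqxx andbT.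
  rewrite pair; last exact: hne.
  rewrite lerDl; apply: sumr_ge0 => w _; rewrite hXX; apply: mulr_ge0; apply: normr_ge0.
have hle2 : S1 <= \sum_(w in A) X r * X w.
  apply: ler_sum => w _; rewrite !hXX [`|X r| * _]mulrC.
  by apply: ler_wpM2l => //; apply: normr_ge0.
split; first by rewrite hS2; apply: le_trans hle2.
split.
  rewrite hS2 /edge_sum /star_edges big_imset /=.
    apply: eq_bigr => u; rewrite in_setC1 => ur; rewrite pair // eq_sym //.
  move=> u v; rewrite !in_setC1 => ur vr /setP /(_ u).
  rewrite !inE eqxx orbT (negbTE ur) /= => /esym /eqP //.
move=> hstrict hlt heq.
have S1eq : S1 = \sum_(w in A) X r * X w.
  apply: le_anti; rewrite hle2 /= -hS2 -heq; exact: hle1.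
have each := @psumr_eq0P _ _ (fun w => w \in A) (fun w => X r * X w - X w * X (g w)).
have hz w : w \in A -> X r * X w - X w * X (g w) = 0.
  apply: each; last by rewrite sumrB -S1eq subrr.
  move=> x _; rewrite subr_ge0 !hXX [`|X r| * _]mulrC.
  by apply: ler_wpM2l => //; apply: normr_ge0.
have hg w : w \in A -> g w = r.
  move=> wA; move/eqP: (hz w wA); rewrite subr_eq0 mulrC => /eqP.
  have Xw : X w != 0.
    by case: hstrict => h; [rewrite gt_eqF|rewrite lt_eqF].
  move=> /(mulfI Xw) hgr.
  apply/eqP; apply/negP => /negP ng.
  have : `|X (g w)| <= `|X (lab (inord 1))|.
    rewrite -{1}(h2 (g w)); apply: hmono; rewrite inordK // lt0n.
    apply/negP => /eqP h0; apply: (negP ng); rewrite -(h2 (g w)) /r.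
    by apply/eqP; congr lab; apply: val_inj.
  by rewrite -hgr leNgt hlt.
rewrite E /star_edges; apply: eq_in_imset => w wA; by rewrite hg // setUC.
Qed.
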